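(* Let $m,p,n$ be positive integers with $p\mid m$, $n>1$, let $G=G(m,p,n)$ act on $\mathbb D^n$, and let $\mathcal H$ be an analytic Hilbert module on $\mathbb D^n$ over $\mathbb C[z_1,\ldots,z_n]$ with a $G$-invariant reproducing kernel. (1) If the multiplication operators $M_{z_1},\ldots,M_{z_n}$ by the coordinate functions on $\mathcal H$ are contractions and satisfy von Neumann's inequality for all $G$-invariant polynomials (i.e. $\|q(M_{z_1},\dots,M_{z_n})\|\le\sup_{\overline{\mathbb D}^n}|q|$ for every $G$-invariant $q$), then for every $\varrho\in\widehat G$ and $1\le i\le\deg\varrho$ the commuting $n$-tuple of restrictions $(M_{\theta_1},\ldots,M_{\theta_n})|_{\mathbb P_\varrho^{ii}\mathcal H}$ is a $\boldsymbol\Theta_n$-contraction. (2) Consequently, at least $\sum_{\varrho\in\widehat G}\deg\varrho$ $\boldsymbol\Theta_n$-contractions arise from $(M_{z_1},\ldots,M_{z_n})$ in this way.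
   Context: $G(m,p,n)$ is the group of $n\times n$ monomial matrices with nonzero entries $m$-th roots of unity whose product is an $(m/p)$-th root of unity, acting by $\sigma\cdot z=\sigma^{-1}z$. $\theta_i(z)=s_i(z_1^m,\ldots,z_n^m)$ for $1\le i\le n-1$ ($s_i$ elementary symmetric), $\theta_n(z)=(z_1\cdots z_n)^{m/p}$, $\boldsymbol\Theta_n=\boldsymbol\theta(\mathbb D^n)$; a $\boldsymbol\Theta_n$-contraction is a commuting tuple $T$ with $\|f(T)\|\le\sup_{\boldsymbol\theta(\overline{\mathbb D}^n)}|f|$ for all polynomials $f$. An analytic Hilbert module on $\mathbb D^n$ is a Hilbert space of holomorphic functions on $\mathbb D^n$ with a reproducing kernel $K$, in which polynomials are dense and on which polynomials act boundedly by multiplication. $K$ is $G$-invariant if $K(\sigma\cdot z,\sigma\cdot w)=K(z,w)$ for all $\sigma\in G$. $\widehat G$ is the set of equivalence classes of irreducible representations of $G$. For $\varrho\in\widehat G$ fix a unitary representation $\pi_\varrho$ in the class $\varrho$ with matrix entries $\pi_\varrho^{ij}(\sigma)$ with respect to an orthonormal basis of $\mathbb C^{\deg\varrho}$, and define $(\mathbb P_\varrho^{ij}f)(z)=\frac{\deg\varrho}{|G|}\sum_{\sigma\in G}\pi_\varrho^{ji}(\sigma^{-1})f(\sigma^{-1}\cdot z)$. *)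

(* Defs.v *)
From HB Require Import structures.
From mathcomp Require Import all_boot all_order all_algebra all_fingroup all_field all_character.
From mathcomp Require Import reals complex.
From mathcomp Require mpoly.
Set Implicit Arguments.
Unset Strict Implicit.
Unset Printing Implicit Defensive.
Import GRing.Theory Num.Theory.
Local Open Scope ring_scope.

(* The group G(m,p,n), realised faithfully as a permutation group.     *)
(* A monomial matrix with m-th roots of unity as nonzero entries is     *)
(* encoded as a permutation of the "points" (j, a) : 'I_n * 'I_m,       *)
(* where (j, a) stands for the vector zeta^a e_j; such permutations are *)
(* exactly those commuting with the shift (j, a) |-> (j, a+1 mod m).    *)
(* (The type 'I_m.-1.+1 is 'I_m for m > 0, and has ord0.)               *)

Definition pt (n m : nat) := ('I_n * 'I_m.-1.+1)%type.

Definition shift_fun (n m : nat) (x : pt n m) : pt n m := (x.1, ordS x.2).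

Lemma shift_fun_inj n m : injective (@shift_fun n m).
Proof.
move=> [j a] [k b] E; case: E => -> E; congr pair; apply: ordS_inj; exact: val_inj.
Qed.

Definition shift (n m : nat) : {perm pt n m} := perm (@shift_fun_inj n m).

(* G(m,p,n): elements of the centraliser of the shift (= the monomial
   matrices with m-th roots of unity entries, i.e. G(m,1,n)) whose product
   of nonzero entries is an (m/p)-th root of unity, i.e. whose exponent sum
   is divisible by p.  This set is already a group; <<_>> just equips it
   with its canonical {group} structure. *)
Definition Gset (m p n : nat) : {set {perm pt n m}} :=
  [set g in ('C[shift n m])%g |
     (p %| \sum_(j < n) nat_of_ord (g (j, ord0)).2)%N].

Definition Gmpn (m p n : nat) : {group {perm pt n m}} := (<< Gset m p n >>)%G.

Section Analytic.
Variable R : realType.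
Local Notation C := R[i].
Variables (m p n : nat) (zeta : C).

Local Notation vec := 'cV[C]_n.
Local Notation fn := (vec -> C).
Local Notation G := (Gmpn m p n).

(* The monomial matrix of g (a group homomorphism g |-> mono g): column j
   is zeta^a e_i where g^-1 (j, 0) = (i, a). *)
Definition mono (g : {perm pt n m}) : 'M[C]_n :=
  \matrix_(i < n, j < n)
    (let x := ((g^-1)%g (j, ord0)) in if x.1 == i then zeta ^+ x.2 else 0).

Definition act (g : {perm pt n m}) (z : vec) : vec := invmx (mono g) *m z.

Definition inD (z : vec) : bool := [forall i, `|z i 0| < 1].
Definition inDbar (z : vec) : bool := [forall i, `|z i 0| <= 1].

Definition coords (z : vec) : 'I_n -> C := fun i => z i 0.

(* polynomial function restricted to D^n (functions on D^n are represented
   by functions on C^n vanishing outside D^n) *)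
Definition polyfun (q : mpoly.mpoly n C) : fn :=
  fun z => if inD z then mpoly.meval (coords z) q else 0.

Definition continuous_on_D (f : fn) : Prop :=
  forall z, inD z -> forall eps : C, 0 < eps ->
    exists2 del : C, 0 < del &
      forall w, inD w -> (forall i, `|w i 0 - z i 0| < del) -> `|f w - f z| < eps.

Definition partial_holo_on_D (f : fn) : Prop :=
  forall z, inD z -> forall j : 'I_n, exists L : C, forall eps : C, 0 < eps ->
    exists2 del : C, 0 < del &
      forall h : C, 0 < `|h| < del ->
        `|(f (z + h *: delta_mx j 0) - f z) / h - L| < eps.

Definition holomorphic_on_D (f : fn) : Prop :=
  continuous_on_D f /\ partial_holo_on_D f.

Definition nrm (ip : fn -> fn -> C) (f : fn) : C := sqrtC (ip f f).

Definition fsub (f g : fn) : fn := fun z => f z - g z.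

Definition kern (K : vec -> vec -> C) (w : vec) : fn :=
  fun z => if inD z then K z w else 0.

Definition polymul (q : mpoly.mpoly n C) (f : fn) : fn :=
  fun z => mpoly.meval (coords z) q * f z.

Record analytic_hilbert_module (H : fn -> Prop) (ip : fn -> fn -> C)
    (K : vec -> vec -> C) : Prop := {
  ahm_0 : H (fun _ => 0);
  ahm_add : forall f g, H f -> H g -> H (fun z => f z + g z);
  ahm_scale : forall (a : C) f, H f -> H (fun z => a * f z);
  ahm_supp : forall f, H f -> forall z, ~~ inD z -> f z = 0;
  ahm_holo : forall f, H f -> holomorphic_on_D f;
  ahm_ip_lin : forall (a : C) f g h, H f -> H g -> H h ->
      ip (fun z => a * f z + g z) h = a * ip f h + ip g h;
  ahm_ip_herm : forall f g, H f -> H g -> ip g f = (ip f g)^*;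
  ahm_ip_pos : forall f, H f -> 0 <= ip f f;
  ahm_ip_def : forall f, H f -> ip f f = 0 -> forall z, f z = 0;
  ahm_complete : forall u : nat -> fn, (forall k, H (u k)) ->
      (forall eps : C, 0 < eps -> exists N, forall k l, (N <= k)%N -> (N <= l)%N ->
          nrm ip (fsub (u k) (u l)) < eps) ->
      exists2 f, H f & forall eps : C, 0 < eps -> exists N, forall k, (N <= k)%N ->
          nrm ip (fsub (u k) f) < eps;
  ahm_kern : forall w, inD w -> H (kern K w);
  ahm_repr : forall w, inD w -> forall f, H f -> ip f (kern K w) = f w;
  ahm_poly : forall q, H (polyfun q);
  ahm_dense : forall f, H f -> forall eps : C, 0 < eps ->
      exists q, nrm ip (fsub f (polyfun q)) < eps;
  ahm_mul : forall q f, H f -> H (polymul q f);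
  ahm_mul_bdd : forall q, exists c : C, forall f, H f ->
      nrm ip (polymul q f) <= c * nrm ip f
}.

Definition G_invariant_kernel (K : vec -> vec -> C) : Prop :=
  forall g, g \in G -> forall z w, inD z -> inD w -> K (act g z) (act g w) = K z w.

Definition G_invariant_poly (q : mpoly.mpoly n C) : Prop :=
  forall g, g \in G -> forall z, mpoly.meval (coords (act g z)) q = mpoly.meval (coords z) q.

Definition Tmon (a : mpoly.multinom n) (T : 'I_n -> fn -> fn) : fn -> fn :=
  foldr (fun i F => (iter (mpoly.fun_of_multinom a i) (T i)) \o F) id (enum 'I_n).

Definition polyop (q : mpoly.mpoly n C) (T : 'I_n -> fn -> fn) (f : fn) : fn :=
  fun z => \sum_(a <- mpoly.msupp q) mpoly.mcoeff a q * Tmon a T f z.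

Definition Mop (phi : vec -> C) (f : fn) : fn := fun z => phi z * f z.
Definition Mz (i : 'I_n) : fn -> fn := Mop (fun z => z i 0).

Definition esym (k : nat) (x : 'I_n -> C) : C :=
  \sum_(A : {set 'I_n} | #|A| == k) \prod_(j in A) x j.

(* theta = (theta_1, ..., theta_n), indices shifted to 0-based *)
Definition theta (z : vec) : 'I_n -> C := fun i =>
  if (i.+1 < n)%N then esym i.+1 (fun j => z j 0 ^+ m)
  else (\prod_(j < n) z j 0) ^+ (m %/ p).

Definition Mtheta (i : 'I_n) : fn -> fn := Mop (fun z => theta z i).

(* Theta_n-contraction: a commuting tuple of operators on the subspace S
   (S invariant, so that the restrictions make sense) with
   ||q(T)|| <= sup_{theta(closed D^n)} |q| for all polynomials q,
   written with an arbitrary upper bound c of |q| on theta(closed D^n). *)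
Definition Theta_contraction (ip : fn -> fn -> C) (S : fn -> Prop)
    (T : 'I_n -> fn -> fn) : Prop :=
  [/\ forall i f, S f -> S (T i f),
      forall i j f, S f -> T i (T j f) = T j (T i f) &
      forall (q : mpoly.mpoly n C) (c : C),
        (forall w, inDbar w -> `|mpoly.meval (theta w) q| <= c) ->
        forall f, S f -> nrm ip (polyop q T f) <= c * nrm ip f].

Definition unitary_rep d (rG : mx_representation C G d) : Prop :=
  forall g, g \in G -> rG g *m (map_mx (@Num.conj_op _) (rG g))^T = 1%:M.

Definition Pproj d (rG : mx_representation C G d) (i j : 'I_d) (f : fn) : fn :=
  fun z => (d%:R / (#|G|)%:R) *
    \sum_(g in G) rG (g^-1)%g j i * f (act (g^-1)%g z).

Definition Prange (H : fn -> Prop) d (rG : mx_representation C G d) (i j : 'I_d)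
  : fn -> Prop := fun f => exists2 g, H g & f = Pproj rG i j g.

End Analytic.

(* Main.v *)
Require Import Defs.
From HB Require Import structures.
From mathcomp Require Import all_boot all_order all_algebra all_fingroup all_field all_character.
From mathcomp Require Import reals complex.
From mathcomp Require mpoly.
From Stdlib Require Import FunctionalExtensionality.
Notation funext := functional_extensionality.
From Stdlib Require Import IndefiniteDescription.
Import Order.TTheory GRing.Theory Num.Theory.
Local Open Scope ring_scope.
Set Implicit Arguments.
Unset Strict Implicit.
Unset Printing Implicit Defensive.
From mathcomp Require Import ring lra.
Section Arith.
Variable R : realType.
Lemma ar_cauchy (a b r2 : R) : a <= r2 / 8%:R -> b <= r2 / 8%:R -> 0 < r2 ->
  2%:R * a + 2%:R * b < r2.
Proof. move=> h1 h2 h3; lra. Qed.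
Lemma ar_den (e A : R) : 0 < e -> 0 <= A -> 0 < e + 4%:R * (A + 1).
Proof. move=> *; lra. Qed.
Lemma ar_s1 (e A : R) : 0 <= A -> e <= e + 4%:R * (A + 1).
Proof. move=> *; lra. Qed.
Lemma ar_sA (e A : R) : 0 < e -> 0 <= A -> e * (4%:R * (A + 1)) <= e * (e + 4%:R * (A + 1)).
Proof. move=> *; nra. Qed.
Lemma ar_pos (B : R) : 0 <= B -> 0 < 4%:R * (B + 1).
Proof. move=> *; lra. Qed.
Lemma ar_final (e s A B ek : R) : ek * (4%:R * (B + 1)) <= e -> s * (4%:R * (A + 1)) <= e ->
  0 < s -> s <= 1 -> 0 <= A -> 0 <= B -> 0 < ek ->
  2%:R * (ek * B) + 2%:R * (s ^+ 2 * A) <= e.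
Proof.
move=> h1 h2 h3 h4 h5 h6 h7.
have h9 : 0 <= s * A * (1 - s) by rewrite mulr_ge0 ?mulr_ge0 ?subr_ge0 // ltW.
rewrite expr2; nra.
Qed.
End Arith.
Section GroupPart.
Variables (m p n : nat).
Hypotheses (m_gt0 : (0 < m)%N) (p_dvd_m : (p %| m)%N).

Local Notation M' := m.-1.+1.
Local Notation sh := (shift n m).

Lemma shiftE (x : pt n m) : sh x = (x.1, ordS x.2).
Proof. by rewrite /shift permE. Qed.

Lemma iter_shift k (j : 'I_n) (a : 'I_M') :
  iter k sh (j, a) = (j, Ordinal (@ltn_pmod (a + k) M' isT)).
Proof.
elim: k => [|k IH] /=.
  by congr pair; apply: val_inj; rewrite /= addn0 modn_small.
rewrite IH shiftE /=; congr pair; apply: val_inj => /=.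
by rewrite -addn1 modnDml addn1 addnS.
Qed.

Lemma cent_iter (g : {perm pt n m}) k x : g \in ('C[sh])%g ->
  g (iter k sh x) = iter k sh (g x).
Proof.
move/cent1P => cg; elim: k => [|k IH] //=.
by rewrite -IH -!permM cg.
Qed.

Definition pi (g : {perm pt n m}) (j : 'I_n) : 'I_n := (g (j, ord0)).1.
Definition cc (g : {perm pt n m}) (j : 'I_n) : nat := (g (j, ord0)).2.

Lemma centE (g : {perm pt n m}) j (a : 'I_M') : g \in ('C[sh])%g ->
  g (j, a) = (pi g j, Ordinal (@ltn_pmod (cc g j + a) M' isT)).
Proof.
move=> cg.
have -> : (j, a) = iter a sh (j, ord0).
  by rewrite iter_shift; congr pair; apply: val_inj; rewrite /= add0n modn_small.
rewrite cent_iter // /pi /cc; case: (g (j, ord0)) => i b.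
by rewrite iter_shift.
Qed.

Lemma pi_inj (g : {perm pt n m}) : g \in ('C[sh])%g -> injective (pi g).
Proof.
move=> cg j k E.
pose t : 'I_M' := Ordinal (@ltn_pmod (cc g k + M' - cc g j) M' isT).
have : g (j, t) = g (k, ord0).
  rewrite !(centE _ _ cg) E; congr pair; apply: val_inj => /=.
  rewrite addn0 modnDmr.
  have hj : (cc g j < M')%N by exact: ltn_ord.
  rewrite addnBA; last by rewrite ltnW // ltn_addl.
  by rewrite addKn -modnDmr modnn addn0 modn_small //; exact: ltn_ord.
by move/perm_inj => [].
Qed.

Lemma Gset_group : group_set (Gset m p n).
Proof.
apply/group_setP; split.
  apply/setIdP; split; first exact: group1. apply/dvdnP; exists 0%N.
  by rewrite mul0n big1 // => j _; rewrite perm1.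
move=> g h /setIdP [cg dg] /setIdP [ch dh].
apply/setIdP; split; first exact: groupM.
have E j : nat_of_ord ((g * h)%g (j, ord0)).2 = ((cc h (pi g j) + cc g j) %% M')%N.
  rewrite permM (centE _ _ cg) (centE _ _ ch) /=; by rewrite addn0 modnDmr.
rewrite (eq_bigr _ (fun j _ => E j)).
have pM : (p %| M')%N by rewrite prednK.
rewrite /dvdn -(modn_dvdm _ pM) modn_summ (modn_dvdm _ pM) big_split /=.
rewrite -(reindex_inj (pi_inj cg) (P := xpredT) (F := cc h)).
by apply: dvdn_add; [exact: dh | exact: dg].
Qed.

Lemma inG (g : {perm pt n m}) : g \in Gmpn m p n -> g \in Gset m p n.
Proof. by rewrite /Gmpn /= gen_set_id //; exact: Gset_group. Qed.

Lemma inG_cent (g : {perm pt n m}) : g \in Gmpn m p n -> g \in ('C[sh])%g.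
Proof. by by move/inG => /setIdP []. Qed.

Lemma inG_dvd (g : {perm pt n m}) : g \in Gmpn m p n -> (p %| \sum_j cc g j)%N.
Proof. by by move/inG => /setIdP []. Qed.

End GroupPart.
Section MonoPart.
Variables (R : realType) (m p n : nat) (zeta : R[i]).
Hypotheses (m_gt0 : (0 < m)%N) (p_dvd_m : (p %| m)%N)
  (zeta_prim : m.-primitive_root zeta).
Local Notation C := R[i].
Local Notation G := (Gmpn m p n).

Lemma zeta_neq0 : zeta != 0.
Proof.
apply/eqP => z0; move: (prim_expr_order zeta_prim); rewrite z0 expr0n.
by rewrite eqn0Ngt m_gt0 /= => /eqP; rewrite eq_sym oner_eq0.
Qed.

Lemma norm_zeta : `|zeta| = 1.
Proof.
apply/eqP; rewrite -(pexpr_eq1 m_gt0) //.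
by rewrite -normrX (prim_expr_order zeta_prim) normr1.
Qed.

Lemma inGV (g : {perm pt n m}) : g \in G -> (g^-1)%g \in ('C[shift n m])%g.
Proof. by move=> gG; apply: (inG_cent m_gt0 p_dvd_m); rewrite groupV. Qed.

Lemma mono_mul (g : {perm pt n m}) (gG : g \in G) (y : 'cV[C]_n) j :
  (mono zeta g *m y) (pi (g^-1)%g j) 0 = zeta ^+ cc (g^-1)%g j * y j 0.
Proof.
rewrite mxE (bigD1 j) //= mxE /= /pi eqxx big1 ?addr0 // => k kj.
rewrite mxE /=; case: ifP => [/eqP E|]; last by rewrite mul0r.
by move/(pi_inj (inGV gG)): E => E; rewrite E eqxx in kj.
Qed.

Lemma mono_unit (g : {perm pt n m}) (gG : g \in G) : mono zeta g \in unitmx.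
Proof.
pose h := (g^-1)%g.
pose W : 'M[C]_n := \matrix_(i, j) if pi h i == j then zeta^-1 ^+ cc h i else 0.
suff: W *m mono zeta g = 1%:M by case/mulmx1_unit.
apply/matrixP => j k; rewrite !mxE (bigD1 (pi h j)) //= big1 ?addr0; last first.
  by move=> i ij; rewrite mxE eq_sym (negbTE ij) mul0r.
rewrite !mxE eqxx /=; rewrite -/h.
have [->|jk] := eqVneq j k.
  by rewrite eqxx exprVn mulVf // expf_neq0 // zeta_neq0.
case: eqP => [E|]; last by rewrite mulr0.
by move/(pi_inj (inGV gG)): E => E; rewrite E eqxx in jk.
Qed.

Definition sig (g : {perm pt n m}) (gG : g \in G) : {perm 'I_n} :=
  perm (pi_inj (inGV gG)).

Lemma esym_perm k (s : {perm 'I_n}) (x : 'I_n -> C) :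
  Defs.esym k (fun j => x (s j)) = Defs.esym k x.
Proof.
rewrite /Defs.esym.
rewrite [RHS](reindex_inj (h := fun A : {set 'I_n} => s @: A)); last first.
  by apply: imset_inj; exact: perm_inj.
apply: eq_big => A; first by rewrite card_imset //; exact: perm_inj.
move=> _; rewrite big_imset //; move=> a b _ _; exact: perm_inj.
Qed.

Lemma theta_mono (g : {perm pt n m}) (gG : g \in G) (y : 'cV[C]_n) k :
  theta m p (mono zeta g *m y) k = theta m p y k.
Proof.
have hG : ((g^-1)%g \in G) by rewrite groupV.
have E j : (mono zeta g *m y) (sig gG j) 0 = zeta ^+ cc (g^-1)%g j * y j 0.
  by rewrite /sig permE mono_mul.
rewrite /theta; case: ifP => _.
  rewrite -(esym_perm _ (sig gG)); congr Defs.esym; apply: funext => j.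
  by rewrite E exprMn -exprM mulnC exprM (prim_expr_order zeta_prim) expr1n mul1r.
rewrite (reindex_inj (perm_inj (s := sig gG))) /=.
rewrite (eq_bigr _ (fun j _ => E j)) big_split /= prodrXr exprMn.
case/dvdnP: (inG_dvd m_gt0 p_dvd_m hG) => t Ht.
rewrite Ht -exprM -mulnA (mulnC p) divnK // mulnC exprM (prim_expr_order zeta_prim).
by rewrite expr1n mul1r.
Qed.

Lemma inD_mono (g : {perm pt n m}) (gG : g \in G) (y : 'cV[C]_n) :
  inD (mono zeta g *m y) = inD y.
Proof.
have E j : `|(mono zeta g *m y) (sig gG j) 0| = `|y j 0|.
  by rewrite /sig permE mono_mul // normrM normrX norm_zeta expr1n mul1r.
apply/forallP/forallP => H j.
  by rewrite -E; exact: H.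
by rewrite -(permKV (sig gG) j) E; exact: H.
Qed.

Lemma act_mono (g : {perm pt n m}) (gG : g \in G) (y : 'cV[C]_n) :
  Defs.act zeta g (mono zeta g *m y) = y.
Proof. by rewrite /Defs.act mulKmx // mono_unit. Qed.

Lemma mono_act (g : {perm pt n m}) (gG : g \in G) (y : 'cV[C]_n) :
  mono zeta g *m Defs.act zeta g y = y.
Proof. by rewrite /Defs.act mulKVmx // mono_unit. Qed.

Lemma theta_act (g : {perm pt n m}) (gG : g \in G) (z : 'cV[C]_n) k :
  theta m p (Defs.act zeta g z) k = theta m p z k.
Proof. by rewrite -{2}(mono_act gG z) theta_mono. Qed.

Lemma inD_act (g : {perm pt n m}) (gG : g \in G) (z : 'cV[C]_n) :
  inD (Defs.act zeta g z) = inD z.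
Proof. by rewrite -{2}(mono_act gG z) inD_mono. Qed.

End MonoPart.
Module MP.
Import mpoly.
Section PolyPart.
Variables (R : realType) (m p n : nat).
Local Notation C := R[i].

Lemma iter_Mop (phi : 'cV[C]_n -> C) k (g : 'cV[C]_n -> C) z :
  iter k (Mop phi) g z = phi z ^+ k * g z.
Proof. by elim: k => [|k IH] /=; rewrite ?mul1r // /Mop IH exprS mulrA. Qed.

Lemma Tmon_Mop (phi : 'I_n -> 'cV[C]_n -> C) a f z :
  Tmon a (fun i => Mop (phi i)) f z = (\prod_i phi i z ^+ a i) * f z.
Proof.
rewrite /Tmon -big_enum /=.
elim: (enum 'I_n) => [|i s IH] /=; first by rewrite big_nil mul1r.
by rewrite iter_Mop IH big_cons mulrA.
Qed.

Lemma polyop_Mop (phi : 'I_n -> 'cV[C]_n -> C) q f z :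
  polyop q (fun i => Mop (phi i)) f z = meval (fun i => phi i z) q * f z.
Proof.
rewrite /polyop mevalE big_distrl /=; apply: eq_bigr => a _.
by rewrite Tmon_Mop mulrA.
Qed.

Definition thp (i : 'I_n) : {mpoly C[n]} :=
  if (i.+1 < n)%N then \sum_(A : {set 'I_n} | #|A| == i.+1) \prod_(j in A) 'X_j ^+ m
  else (\prod_(j < n) 'X_j) ^+ (m %/ p).

Lemma meval_thp z i : meval (coords z) (thp i) = theta m p z i.
Proof.
rewrite /thp /theta /Defs.esym; case: ifP => _.
  rewrite rmorph_sum; apply: eq_bigr => A _; rewrite rmorph_prod.
  by apply: eq_bigr => j _; rewrite rmorphXn /= mevalXU.
rewrite rmorphXn rmorph_prod /=; congr (_ ^+ _); apply: eq_bigr => j _.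
by rewrite mevalXU.
Qed.

Definition thq (q : {mpoly C[n]}) : {mpoly C[n]} := q \mPo [tuple thp i | i < n].

Lemma meval_thq z q : meval (coords z) (thq q) = meval (theta m p z) q.
Proof.
rewrite /thq comp_mpoly_meval; apply: meval_eq => i.
by rewrite tnth_mktuple meval_thp.
Qed.

End PolyPart.
End MP.
Section Hilbert.
Variables (R : realType) (n : nat).
Local Notation C := R[i].
Local Notation fn := ('cV[C]_n -> C).
Variables (H : fn -> Prop) (ip : fn -> fn -> C) (K : 'cV[C]_n -> 'cV[C]_n -> C).
Hypothesis HA : analytic_hilbert_module H ip K.

Lemma H0 : H (fun _ => 0). Proof. exact: ahm_0 HA. Qed.
Lemma HD f g : H f -> H g -> H (fun z => f z + g z). Proof. by move=> Hf Hg; exact: (ahm_add HA Hf Hg). Qed.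
Lemma HZ a f : H f -> H (fun z => a * f z). Proof. by move=> Hf; exact: (ahm_scale HA a Hf). Qed.
Lemma Hsub f g : H f -> H g -> H (fun z => f z - g z).
Proof.
move=> Hf Hg; have -> : (fun z => f z - g z) = (fun z => f z + (-1) * g z).
  by apply: funext => z; rewrite mulN1r.
by apply: (HD Hf); exact: HZ.
Qed.
Lemma HZB f t v : H f -> H v -> H (fun z => f z - t * v z).
Proof. by move=> Hf Hv; apply: (Hsub Hf); exact: HZ. Qed.

Lemma ip_lin a f g h : H f -> H g -> H h ->
  ip (fun z => a * f z + g z) h = a * ip f h + ip g h.
Proof. by move=> Hf Hg Hh; apply: (ahm_ip_lin HA). Qed.
Lemma ip_herm f g : H f -> H g -> ip g f = (ip f g)^*.
Proof. by move=> Hf Hg; apply: (ahm_ip_herm HA). Qed.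

Lemma ip0l h : H h -> ip (fun _ => 0) h = 0.
Proof.
move=> Hh; have := ip_lin 1 H0 H0 Hh.
have -> : (fun z : 'cV[C]_n => 1 * 0 + 0) = (fun _ => 0) :> fn.
  by apply: funext => z; rewrite mulr0 addr0.
rewrite mul1r => E; by rewrite -[LHS](addrK (ip (fun _ => 0) h)) -E subrr.
Qed.
Lemma ip0r h : H h -> ip h (fun _ => 0) = 0.
Proof. by move=> Hh; rewrite ip_herm ?ip0l ?conjC0 //; exact: H0. Qed.

Lemma ipDl f g h : H f -> H g -> H h ->
  ip (fun z => f z + g z) h = ip f h + ip g h.
Proof.
move=> Hf Hg Hh; rewrite -[ip f h]mul1r -(ip_lin 1 Hf Hg Hh).
by congr ip; apply: funext => z; rewrite mul1r.
Qed.
Lemma ipZl a f h : H f -> H h -> ip (fun z => a * f z) h = a * ip f h.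
Proof.
move=> Hf Hh; rewrite -[RHS]addr0 -(ip0l Hh) -(ip_lin a Hf H0 Hh).
by congr ip; apply: funext => z; rewrite addr0.
Qed.

Lemma ip_real f : H f -> ip f f \is Num.real.
Proof. by move=> Hf; apply: ger0_real; exact: (ahm_ip_pos HA Hf). Qed.
Lemma ip_conj f : H f -> (ip f f)^* = ip f f.
Proof. by move=> Hf; rewrite -ip_herm. Qed.

Lemma ip_expand f v t : H f -> H v ->
  ip (fun z => f z - t * v z) (fun z => f z - t * v z) =
  ip f f - t^* * ip f v - t * ip v f + t * t^* * ip v v.
Proof.
move=> Hf Hv.
set g := (fun z => f z - t * v z).
have Hg : H g by exact: HZB.
have Eg : g = (fun z => (- t) * v z + f z) by apply: funext => z; rewrite /g addrC mulNr.
rewrite {1}Eg ip_lin //.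
have E1 : ip v g = - t^* * ip v v + ip v f.
  rewrite ip_herm // Eg.
  rewrite ip_lin // rmorphD rmorphM /= -ip_herm // -ip_herm //.
  by rewrite rmorphN.
have E2 : ip f g = - t^* * ip f v + ip f f.
  rewrite ip_herm // Eg.
  rewrite ip_lin // rmorphD rmorphM /= -ip_herm // -ip_herm //.
  by rewrite rmorphN.
rewrite E1 E2; ring.
Qed.

Lemma ip_eq0 f : H f -> ip f f = 0 -> f = (fun _ => 0).
Proof. by move=> Hf H0f; apply: funext => z; exact: (ahm_ip_def HA Hf H0f). Qed.

Lemma key f v : H f -> H v -> ip v v != 0 ->
  ip (fun z => f z - (ip f v / ip v v) * v z) (fun z => f z - (ip f v / ip v v) * v z)
  = ip f f - ip f v * (ip f v)^* / ip v v.
Proof.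
move=> Hf Hv c0; rewrite ip_expand //.
rewrite fmorph_div /= ip_conj // (ip_herm Hf Hv).
set b := ip f v; set c := ip v v.
by field.
Qed.

Lemma ip_ge0 f : H f -> 0 <= ip f f.
Proof. by move=> Hf; exact: (ahm_ip_pos HA Hf). Qed.

Lemma ipZr a f h : H f -> H h -> ip h (fun z => a * f z) = a^* * ip h f.
Proof.
move=> Hf Hh; rewrite ip_herm //; last exact: HZ.
by rewrite ipZl // rmorphM /= -ip_herm.
Qed.

Lemma ip_v0 f v : H f -> H v -> ip v v = 0 -> ip f v = 0.
Proof. by move=> Hf Hv /(ip_eq0 Hv) E; rewrite E ip0r. Qed.

Lemma CS f v : H f -> H v -> ip f v * (ip f v)^* <= ip f f * ip v v.
Proof.
move=> Hf Hv; have [c0|c0] := eqVneq (ip v v) 0.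
  by rewrite c0 (ip_v0 Hf Hv c0) mul0r mulr0.
have cpos : 0 < ip v v by rewrite lt0r c0 ip_ge0.
rewrite -ler_pdivrMr //.
have := ip_ge0 (HZB (ip f v / ip v v) Hf Hv); rewrite key //.
by rewrite subr_ge0.
Qed.

Lemma approx f v (e : R) : H f -> H v -> 0 <= e ->
  (forall t, ip f f - (e%:C)%C <= ip (fun z => f z - t * v z) (fun z => f z - t * v z)) ->
  ip f v * (ip f v)^* <= (e%:C)%C * ip v v.
Proof.
move=> Hf Hv e0 Ht; have [c0|c0] := eqVneq (ip v v) 0.
  by rewrite c0 (ip_v0 Hf Hv c0) mul0r mulr0.
have cpos : 0 < ip v v by rewrite lt0r c0 ip_ge0.
rewrite -ler_pdivrMr //; move: (Ht (ip f v / ip v v)); rewrite key //.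
by rewrite lerD2l lerN2.
Qed.

Lemma parallelogram f g : H f -> H g ->
  ip (fun z => f z - g z) (fun z => f z - g z) + ip (fun z => f z + g z) (fun z => f z + g z)
  = 2%:R * ip f f + 2%:R * ip g g.
Proof.
move=> Hf Hg.
have E1 : (fun z => f z - g z) = (fun z => f z - 1 * g z) by apply: funext => z; rewrite mul1r.
have E2 : (fun z => f z + g z) = (fun z => f z - (-1) * g z) by apply: funext => z; rewrite mulN1r opprK.
rewrite E1 E2 !ip_expand // rmorphN rmorph1 (ip_herm Hf Hg); ring.
Qed.

Definition comb (L : seq (C * 'cV[C]_n)) : fn := fun z => \sum_(x <- L) x.1 * kern K x.2 z.
Definition inDL (L : seq (C * 'cV[C]_n)) := all (fun x => inD x.2) L.

Lemma H_kern w : inD w -> H (kern K w).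
Proof. by move=> Dw; exact: (ahm_kern HA Dw). Qed.
Lemma repr w f : inD w -> H f -> ip f (kern K w) = f w.
Proof. by move=> Dw Hf; exact: (ahm_repr HA Dw Hf). Qed.

Lemma comb_cons x L : comb (x :: L) = fun z => x.1 * kern K x.2 z + comb L z.
Proof. by apply: funext => z; rewrite /comb big_cons. Qed.

Lemma H_comb L : inDL L -> H (comb L).
Proof.
elim: L => [|x L IH] /=.
  have -> : comb [::] = fun _ => 0 by apply: funext => z; rewrite /comb big_nil.
  by move=> _; exact: H0.
case/andP => Dx DL; rewrite comb_cons; apply: HD; last exact: IH.
by apply: HZ; exact: H_kern.
Qed.

Lemma ip_comb L f : inDL L -> H f -> ip (comb L) f = \sum_(x <- L) x.1 * (f x.2)^*.
Proof.
move=> DL Hf; elim: L DL => [|x L IH] /=.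
  have -> : comb [::] = fun _ => 0 by apply: funext => z; rewrite /comb big_nil.
  by rewrite big_nil ip0l.
case/andP => Dx DL; rewrite comb_cons ip_lin; [|exact: H_kern|exact: H_comb|done].
by rewrite IH // big_cons (ip_herm Hf (H_kern Dx)) repr.
Qed.

Definition QQ (L : seq (C * 'cV[C]_n)) : C :=
  \sum_(x <- L) x.1 * (\sum_(y <- L) y.1 * K x.2 y.2)^*.

Lemma ip_combcomb L : inDL L -> ip (comb L) (comb L) = QQ L.
Proof.
move=> DL; rewrite ip_comb //; last exact: H_comb.
rewrite /QQ big_seq [RHS]big_seq.
apply: eq_bigr => x xL; congr (_ * _^*); apply: eq_bigr => y _.
by rewrite /kern (allP DL x xL).
Qed.

Lemma comb_cat A B : comb (A ++ B) = fun z => comb A z + comb B z.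
Proof. by apply: funext => z; rewrite /comb big_cat. Qed.

Lemma comb_scale a A : comb (map (fun x => (a * x.1, x.2)) A) = fun z => a * comb A z.
Proof.
apply: funext => z; rewrite /comb big_map big_distrr /=.
by apply: eq_bigr => x _; rewrite mulrA.
Qed.

Lemma inDL_cat A B : inDL (A ++ B) = inDL A && inDL B.
Proof. by rewrite /inDL all_cat. Qed.
Lemma inDL_scale a A : inDL (map (fun x => (a * x.1, x.2)) A) = inDL A.
Proof. by rewrite /inDL all_map. Qed.

End Hilbert.
Lemma small0 (R : realType) (d : R[i]) :
  (forall e : R, 0 < e -> d * d^* <= (e%:C)%C) -> d = 0.
Proof.
move=> He; set x := d * d^*.
have x0 : 0 <= x := mul_conjC_ge0 d.
have xE : x = ((complex.Re x)%:C)%C by rewrite RRe_real // ger0_real.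
have r0 : 0 <= complex.Re x by rewrite -ler0c -xE.
have : complex.Re x <= 0.
  rewrite leNgt; apply/negP => rpos.
  have := He (complex.Re x / 2%:R) (divr_gt0 rpos (ltr0Sn _ 1)).
  rewrite -/x {1}xE lecR => h; clear -h rpos; lra.
move=> rle; have : x = 0 by rewrite xE (@le_anti _ _ (complex.Re x) 0); rewrite ?rle ?r0.
by move/eqP; rewrite mulf_eq0 conjC_eq0 orbb => /eqP.
Qed.

Lemma ineq2 (R : realType) (a b : R[i]) :
  (a + b) * (a + b)^* <= 2%:R * (a * a^*) + 2%:R * (b * b^*).
Proof.
rewrite -subr_ge0.
have -> : 2%:R * (a * a^*) + 2%:R * (b * b^*) - (a + b) * (a + b)^* = (a - b) * (a - b)^*.
  rewrite !rmorphD !rmorphN /=; ring.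
exact: mul_conjC_ge0.
Qed.

Definition eps (R : realType) (k : nat) : R := (k.+1%:R)^-1.

Lemma eps_gt0 (R : realType) k : 0 < eps R k.
Proof. by rewrite /eps invr_gt0 ltr0Sn. Qed.

Lemma smallN (R : realType) (c : R) : 0 < c -> exists N, forall k, (N <= k)%N -> eps R k <= c.
Proof.
move=> c0; exists (Num.Def.archi_bound (c^-1)) => k Nk.
have ci : 0 < c^-1 by rewrite invr_gt0.
have h1 := archi_boundP (ltW ci).
have h2 : c^-1 <= k.+1%:R.
  apply: (le_trans (ltW h1)); rewrite ler_nat; exact: leqW.
rewrite /eps -[c]invrK lef_pV2 // ?posrE ?ltr0Sn ?invr_gt0 //.
Qed.

Section Invariance.
Variables (R : realType) (n : nat).
Local Notation C := R[i].
Local Notation fn := ('cV[C]_n -> C).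
Variables (H : fn -> Prop) (ip : fn -> fn -> C) (K : 'cV[C]_n -> 'cV[C]_n -> C).
Hypothesis HA : analytic_hilbert_module H ip K.
Variables (al be : 'cV[C]_n -> 'cV[C]_n).
Hypotheses (hab : forall w, al (be w) = w) (hDa : forall z, inD (al z) = inD z)
  (hDb : forall w, inD (be w) = inD w)
  (hK : forall z w, inD z -> inD w -> K (al z) (al w) = K z w).

Definition Lmap (L : seq (C * 'cV[C]_n)) := map (fun x => (x.1, be x.2)) L.

Lemma inDL_map L : inDL (Lmap L) = inDL L.
Proof. by rewrite /inDL /Lmap all_map; apply: eq_all => x /=; rewrite hDb. Qed.

Lemma comb_map L : inDL L -> comb K (Lmap L) = fun z => comb K L (al z).
Proof.
move=> DL; apply: funext => z; rewrite /comb /Lmap big_map big_seq [RHS]big_seq.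
apply: eq_bigr => x xL /=; congr (_ * _); rewrite /kern hDa.
case: ifP => // Dz; have Dx := allP DL x xL.
by rewrite -{2}(hab x.2) hK // hDb.
Qed.

Lemma QQ_map L : inDL L -> QQ K (Lmap L) = QQ K L.
Proof.
move=> DL; rewrite /QQ /Lmap big_map big_seq [RHS]big_seq.
apply: eq_bigr => x xL /=; congr (_ * _^*); rewrite big_map big_seq [RHS]big_seq.
apply: eq_bigr => y yL /=; congr (_ * _).
by rewrite -hK ?hab ?hDb //; [exact: (allP DL x xL) | exact: (allP DL y yL)].
Qed.

Definition NL (L : seq (C * 'cV[C]_n)) := map (fun x => ((-1) * x.1, x.2)) L.

Lemma fsub_comb A B : fsub (comb K A) (comb K B) = comb K (A ++ NL B).
Proof.
rewrite comb_cat /NL comb_scale; apply: funext => z.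
by rewrite /fsub mulN1r.
Qed.

Lemma Lmap_cat A B : Lmap (A ++ NL B) = Lmap A ++ NL (Lmap B).
Proof. by rewrite /Lmap /NL map_cat -!map_comp. Qed.

Lemma inDL_NL A : inDL (NL A) = inDL A.
Proof. exact: inDL_scale. Qed.

Lemma ltC0 (x : R) : (0 < (x%:C)%C :> C) = (0 < x).
Proof. by rewrite -(ltcR 0 x) rmorph0. Qed.

Lemma H_comp u : H u -> H (fun z => u (al z)).
Proof.
move=> Hu.
pose e L := fun z => u z - comb K L z.
have He L : inDL L -> H (e L) by move=> DL; exact: (Hsub HA Hu (H_comb HA DL)).
pose dd L := complex.Re (ip (e L) (e L)).
have ddE L : inDL L -> ip (e L) (e L) = ((dd L)%:C)%C.
  by move=> DL; rewrite /dd RRe_real // (ip_real HA (He L DL)).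
have dd0 L : inDL L -> 0 <= dd L.
  by move=> DL; rewrite -ler0c -ddE //; exact: (ip_ge0 HA (He L DL)).
pose E : R -> Prop := fun r => exists2 L, inDL L & r = dd L.
have hinf : classical_sets.has_inf E.
  split; first by exists (dd [::]); exists [::].
  by exists 0 => r [L DL ->]; exact: dd0.
pose del := reals.inf E.
have lb L : inDL L -> del <= dd L.
  by move=> DL; apply: (reals.ge_inf hinf.2); exists L.
have adh k : exists L, inDL L && (dd L < del + eps R k).
  have [r [L DL ->] hr] := reals.inf_adherent (eps_gt0 R k) hinf.
  by exists L; rewrite DL.
pose Ls k := proj1_sig (constructive_indefinite_description _ (adh k)).
have LsP k : inDL (Ls k) && (dd (Ls k) < del + eps R k).
  exact: (proj2_sig (constructive_indefinite_description _ (adh k))).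
have PE k w : inD w -> (u w - comb K (Ls k) w) * (u w - comb K (Ls k) w)^* <=
    ((eps R k)%:C)%C * ip (kern K w) (kern K w).
  move=> Dw; case/andP: (LsP k) => DL hd.
  have <- : ip (e (Ls k)) (kern K w) = u w - comb K (Ls k) w by rewrite (repr HA Dw (He _ DL)).
  apply: (approx HA (He _ DL) (H_kern HA Dw) (ltW (eps_gt0 R k))) => t.
  have -> : (fun z => e (Ls k) z - t * kern K w z) = e ((t, w) :: Ls k).
    by apply: funext => z; rewrite /e comb_cons /=; ring.
  have DL' : inDL ((t, w) :: Ls k) by rewrite /= Dw.
  rewrite !ddE // -rmorphB lecR.
  move: (lb _ DL') hd => h1 h2; clear -h1 h2; lra.
have CA k l : ip (fsub (comb K (Ls k)) (comb K (Ls l))) (fsub (comb K (Ls k)) (comb K (Ls l)))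
    <= ((2%:R * eps R k + 2%:R * eps R l)%:C)%C.
  case/andP: (LsP k) => Dk hk; case/andP: (LsP l) => Dl hl.
  pose Lm := map (fun x => (2%:R^-1 * x.1, x.2)) (Ls k ++ Ls l).
  have Dm : inDL Lm by rewrite /Lm inDL_scale inDL_cat Dk Dl.
  have P := parallelogram HA (He _ Dl) (He _ Dk).
  have E1 : (fun z => e (Ls l) z - e (Ls k) z) = fsub (comb K (Ls k)) (comb K (Ls l)).
    by apply: funext => z; rewrite /e /fsub; ring.
  have E2 : (fun z => e (Ls l) z + e (Ls k) z) = (fun z => 2%:R * e Lm z).
    apply: funext => z; rewrite /e /Lm comb_scale comb_cat /= mulrBr mulrA divff.
      by rewrite mul1r; ring.
    by rewrite pnatr_eq0.
  have E3 : ip (fun z => 2%:R * e Lm z) (fun z => 2%:R * e Lm z) = 4%:R * ip (e Lm) (e Lm).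
    have HLm := He _ Dm.
    rewrite (ipZl HA 2%:R HLm (HZ HA 2%:R HLm)) (ipZr HA 2%:R HLm HLm).
    by rewrite conjC_nat mulrA -natrM.
  rewrite E1 E2 E3 !ddE // in P.
  have -> : ip (fsub (comb K (Ls k)) (comb K (Ls l))) (fsub (comb K (Ls k)) (comb K (Ls l)))
     = ((2%:R * dd (Ls l) + 2%:R * dd (Ls k) - 4%:R * dd Lm)%:C)%C.
    rewrite rmorphB rmorphD !rmorphM !rmorph_nat /= -P; ring.
  rewrite lecR; move: (lb _ Dm) hk hl => h1 h2 h3; clear -h1 h2 h3; lra.
pose v k := comb K (Lmap (Ls k)).
have Dv k : inDL (Lmap (Ls k)) by rewrite inDL_map; case/andP: (LsP k).
have Hv k : H (v k) by exact: (H_comb HA (Dv k)).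
have CAv k l : ip (fsub (v k) (v l)) (fsub (v k) (v l))
    <= ((2%:R * eps R k + 2%:R * eps R l)%:C)%C.
  case/andP: (LsP k) => Dk _; case/andP: (LsP l) => Dl _.
  have DD : inDL (Ls k ++ NL (Ls l)) by rewrite inDL_cat inDL_NL Dk Dl.
  rewrite /v fsub_comb -Lmap_cat (ip_combcomb HA) ?inDL_map // QQ_map //.
  by rewrite -(ip_combcomb HA) // -fsub_comb.
have cauchy : forall eps0 : C, 0 < eps0 -> exists N, forall k l, (N <= k)%N -> (N <= l)%N ->
    nrm ip (fsub (v k) (v l)) < eps0.
  move=> eps0 e0; set r := complex.Re eps0.
  have eE : eps0 = (r%:C)%C by rewrite RRe_real // gtr0_real.
  have r0 : 0 < r by rewrite -ltC0 -eE.
  have r2 : 0 < r ^+ 2 by rewrite exprn_gt0.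
  have [N hN] := smallN (divr_gt0 r2 (ltr0Sn R 7)).
  exists N => k l hk hl; rewrite /nrm.
  set x := ip _ _.
  have x0 : 0 <= x by exact: (ip_ge0 HA (Hsub HA (Hv k) (Hv l))).
  have xlt : x < ((r ^+ 2)%:C)%C.
    apply: le_lt_trans (CAv k l) _; rewrite ltcR.
    exact: ar_cauchy (hN k hk) (hN l hl) r2.
  have rC : 0 < ((r%:C)%C : C) by rewrite ltC0.
  rewrite eE -(sqrCK (ltW rC)).
  by rewrite ltr_sqrtC // ?nnegrE // -rmorphXn ?ler0c ?ltW.
have [y Hy conv] := ahm_complete HA Hv cauchy.
suff -> : (fun z => u (al z)) = y by [].
apply: funext => z.
case Dz: (inD z); last first.
  by rewrite (ahm_supp HA Hu) ?hDa ?Dz // (ahm_supp HA Hy) ?Dz.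
apply/eqP; rewrite -subr_eq0; apply/eqP; apply: small0 => eR eR0.
set A := complex.Re (ip (kern K z) (kern K z)).
have AE : ip (kern K z) (kern K z) = (A%:C)%C by rewrite RRe_real // (ip_real HA (H_kern HA Dz)).
have A0 : 0 <= A by rewrite -ler0c -AE; exact: (ip_ge0 HA (H_kern HA Dz)).
have Daz : inD (al z) by rewrite hDa.
set B := complex.Re (ip (kern K (al z)) (kern K (al z))).
have BE : ip (kern K (al z)) (kern K (al z)) = (B%:C)%C.
  by rewrite RRe_real // (ip_real HA (H_kern HA Daz)).
have B0 : 0 <= B by rewrite -ler0c -BE; exact: (ip_ge0 HA (H_kern HA Daz)).
pose s := eR / (eR + 4%:R * (A + 1)).
have den0 : 0 < eR + 4%:R * (A + 1) by exact: ar_den.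
have s0 : 0 < s by rewrite /s divr_gt0.
have s1 : s <= 1 by rewrite /s ler_pdivrMr // mul1r; exact: ar_s1.
have sA : s * (4%:R * (A + 1)) <= eR.
  rewrite /s mulrAC ler_pdivrMr //; exact: ar_sA.
have sC : 0 < ((s%:C)%C : C) by rewrite ltC0.
have [N1 hN1] := conv _ sC.
have cB : 0 < eR / (4%:R * (B + 1)) by apply: divr_gt0 => //; exact: ar_pos.
have [N2 hN2] := smallN cB.
pose k := maxn N1 N2.
have h1 := hN1 k (leq_maxl _ _).
have h2 := hN2 k (leq_maxr _ _).
have h2' : eps R k * (4%:R * (B + 1)) <= eR.
  by rewrite -ler_pdivlMr // ar_pos.
pose F := fsub (v k) y.
have HF : H F by exact: (Hsub HA (Hv k) Hy).
have FF : ip F F <= ((s ^+ 2)%:C)%C.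
  rewrite -(sqrtCK (ip F F)) rmorphXn /= !expr2.
  by apply: ler_pM; rewrite ?sqrtC_ge0 ?(ip_ge0 HA HF) ?ltW.
have Fz : F z * (F z)^* <= ((s ^+ 2 * A)%:C)%C.
  rewrite -(repr HA Dz HF) rmorphM /= -AE.
  apply: le_trans (CS HA HF (H_kern HA Dz)) _.
  by apply: ler_wpM2r => //; exact: (ip_ge0 HA (H_kern HA Dz)).
have bz := PE k (al z) Daz; rewrite BE -rmorphM /= in bz.
have vz : v k z = comb K (Ls k) (al z).
  by rewrite /v comb_map //; case/andP: (LsP k).
have -> : u (al z) - y z = (u (al z) - comb K (Ls k) (al z)) + F z.
  by rewrite /F /fsub vz; ring.
apply: le_trans (ineq2 _ _) _.
apply: le_trans (lerD (ler_wpM2l _ bz) (ler_wpM2l _ Fz)) _; rewrite ?ler0n //.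
have -> : 2%:R * ((eps R k * B)%:C)%C + 2%:R * ((s ^+ 2 * A)%:C)%C =
  ((2%:R * (eps R k * B) + 2%:R * (s ^+ 2 * A))%:C)%C :> C.
  by rewrite rmorphD !(rmorphM (real_complex R)) rmorph_nat.
rewrite lecR.
have ek0 := eps_gt0 R k.
exact: ar_final h2' sA s0 s1 A0 B0 ek0.
Qed.

End Invariance.
Lemma H_sum (R : realType) (n : nat) (H : ('cV[R[i]]_n -> R[i]) -> Prop) ip K
  (HA : analytic_hilbert_module H ip K) (I : Type) (r : seq I) (P : pred I)
  (F : I -> 'cV[R[i]]_n -> R[i]) :
  (forall i, P i -> H (F i)) -> H (fun z => \sum_(i <- r | P i) F i z).
Proof.
move=> HF; elim: r => [|x r IH].
  have -> : (fun z => \sum_(i <- [::] | P i) F i z) = (fun _ => 0).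
    by apply: funext => z; rewrite big_nil.
  exact: (H0 HA).
case Px: (P x).
  have -> : (fun z => \sum_(i <- x :: r | P i) F i z) =
      (fun z => F x z + \sum_(i <- r | P i) F i z).
    by apply: funext => z; rewrite big_cons Px.
  exact: (HD HA (HF x Px) IH).
have -> : (fun z => \sum_(i <- x :: r | P i) F i z) = (fun z => \sum_(i <- r | P i) F i z).
  by apply: funext => z; rewrite big_cons Px.
exact: IH.
Qed.

Section Main.
Variables (R : realType) (m p n : nat) (zeta : R[i]).
Hypotheses (m_gt0 : (0 < m)%N) (p_dvd_m : (p %| m)%N)
  (zeta_prim : m.-primitive_root zeta).
Local Notation C := R[i].
Local Notation fn := ('cV[C]_n -> C).
Variables (H : fn -> Prop) (ip : fn -> fn -> C) (K : 'cV[C]_n -> 'cV[C]_n -> C).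
Hypotheses (HA : analytic_hilbert_module H ip K) (HK : G_invariant_kernel m p zeta K)
  (HvN : forall (q : mpoly.mpoly n R[i]), G_invariant_poly m p zeta q ->
     forall c : R[i], (forall w, inDbar w -> `|mpoly.meval (coords w) q| <= c) ->
     forall f, H f -> nrm ip (polyop q (@Mz R n) f) <= c * nrm ip f).

Lemma H_act (g : {perm pt n m}) (gG : g \in Gmpn m p n) u :
  H u -> H (fun z => u (Defs.act zeta g z)).
Proof.
apply: (H_comp HA (be := fun w => mono zeta g *m w)).
- by move=> w; rewrite (act_mono m_gt0 p_dvd_m zeta_prim gG).
- by move=> z; rewrite (inD_act m_gt0 p_dvd_m zeta_prim gG).
- by move=> w; rewrite (inD_mono m_gt0 p_dvd_m zeta_prim gG).
- by move=> z w Dz Dw; exact: HK.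
Qed.

Lemma H_Pproj d (rG : mx_representation C (Gmpn m p n) d) (i j : 'I_d) g :
  H g -> H (Pproj zeta rG i j g).
Proof.
move=> Hg; rewrite /Pproj; apply: (HZ HA).
apply: (H_sum HA) => h hG; apply: (HZ HA); apply: H_act => //.
by rewrite groupV.
Qed.

Lemma polyop_Mtheta q (f : fn) z :
  polyop q (@Mtheta R m p n) f z = mpoly.meval (theta m p z) q * f z.
Proof. exact: (MP.polyop_Mop (fun i z => theta m p z i)). Qed.

Lemma polyop_Mz q (f : fn) z :
  polyop q (@Mz R n) f z = mpoly.meval (coords z) q * f z.
Proof. exact: (MP.polyop_Mop (fun i z => z i 0)). Qed.

Lemma theta_actf (g : {perm pt n m}) (gG : g \in Gmpn m p n) z :
  theta m p (Defs.act zeta g z) = theta m p z.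
Proof. by apply: funext => k; rewrite (theta_act m_gt0 p_dvd_m zeta_prim gG). Qed.

Lemma main_tc d (rG : mx_representation C (Gmpn m p n) d) (i : 'I_d) :
  Theta_contraction m p ip (Prange zeta H rG i i) (@Mtheta R m p n).
Proof.
split.
- move=> k f [g Hg ->]; exists (Mtheta m p k g).
    have -> : Mtheta m p k g = polymul (@MP.thp R m p n k) g.
      by apply: funext => z; rewrite /polymul MP.meval_thp.
    exact: (ahm_mul HA).
  apply: funext => z; rewrite /Mtheta /Mop /Pproj mulrCA; congr (_ * _).
  rewrite big_distrr /=; apply: eq_bigr => h hG.
  have hG' : (h^-1)%g \in Gmpn m p n by rewrite groupV.
  by rewrite (theta_act m_gt0 p_dvd_m zeta_prim hG') mulrCA.
- by move=> k l f _; apply: funext => z; rewrite /Mtheta /Mop mulrCA.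
- move=> q c hc f [g Hg ->].
  have -> : polyop q (@Mtheta R m p n) (Pproj zeta rG i i g) =
      polyop (@MP.thq R m p n q) (@Mz R n) (Pproj zeta rG i i g).
    by apply: funext => z; rewrite polyop_Mtheta polyop_Mz MP.meval_thq.
  apply: HvN; last exact: H_Pproj.
    move=> h hG z; rewrite !MP.meval_thq theta_actf //.
  by move=> w Dw; rewrite MP.meval_thq; exact: hc.
Qed.

End Main.

Theorem theorem4p5 (R : realType) (m p n : nat) (zeta : R[i])
  (m_gt0 : (0 < m)%N) (p_gt0 : (0 < p)%N) (p_dvd_m : (p %| m)%N) (n_gt1 : (1 < n)%N)
  (zeta_prim : m.-primitive_root zeta)
  (H : ('cV[R[i]]_n -> R[i]) -> Prop)
  (ip : ('cV[R[i]]_n -> R[i]) -> ('cV[R[i]]_n -> R[i]) -> R[i])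
  (K : 'cV[R[i]]_n -> 'cV[R[i]]_n -> R[i])
  (HA : analytic_hilbert_module H ip K)
  (HK : G_invariant_kernel m p zeta K)
  (Hcontr : forall (i : 'I_n) f, H f -> nrm ip (Mz i f) <= nrm ip f)
  (HvN : forall (q : mpoly.mpoly n R[i]), G_invariant_poly m p zeta q ->
     forall c : R[i], (forall w, inDbar w -> `|mpoly.meval (coords w) q| <= c) ->
     forall f, H f -> nrm ip (polyop q (@Mz R n) f) <= c * nrm ip f) :
  (* (1) *)
  (forall (d : nat) (rG : mx_representation R[i] (Gmpn m p n) d),
     mx_irreducible rG -> unitary_rep rG ->
     forall i : 'I_d,
       Theta_contraction m p ip (Prange zeta H rG i i) (@Mtheta R m p n))
  /\
  (* (2): for a complete system (pi_k)_{k < N} of representatives of the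
     classes in \hat G, the sum_k deg(pi_k) tuples indexed by (k, i),
     i < deg pi_k, are all Theta_n-contractions *)
  (forall (N : nat) (d : 'I_N -> nat)
          (rG : forall k : 'I_N, mx_representation R[i] (Gmpn m p n) (d k)),
     (forall k, mx_irreducible (rG k)) ->
     (forall k, unitary_rep (rG k)) ->
     (forall k l, mx_rsim (rG k) (rG l) -> k = l) ->
     (forall (d' : nat) (r : mx_representation R[i] (Gmpn m p n) d'),
        mx_irreducible r -> exists k, mx_rsim r (rG k)) ->
     forall (k : 'I_N) (i : 'I_(d k)),
       Theta_contraction m p ip (Prange zeta H (rG k) i i) (@Mtheta R m p n)).
Proof.
split.
  by move=> d rG _ _ i; exact: (main_tc m_gt0 p_dvd_m zeta_prim HA HK HvN).
by move=> N d rG _ _ _ _ k i; exact: (main_tc m_gt0 p_dvd_m zeta_prim HA HK HvN (rG k) i).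
Qed.
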